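(* Let $K\in\mathbb{N}$ and let $\tilde{\mathcal{P}}_K$ be the set of all $K$-variate normal distributions $\mathcal{N}_K(\boldsymbol\mu,\boldsymbol\Sigma)$ with $\boldsymbol\mu\in\mathbb{R}^K$ and $\boldsymbol\Sigma$ a $K\times K$ positive definite matrix. Then $-d_{\mathrm{Jeff}}$ is not conditionally positive definite on $\tilde{\mathcal{P}}_K^2$; that is, there exist $n\in\mathbb{N}$, $\boldsymbol y_1,\dots,\boldsymbol y_n\in\tilde{\mathcal{P}}_K$ and $c_1,\dots,c_n\in\mathbb{R}$ with $\sum_{i=1}^n c_i=0$ such that $\sum_{i=1}^n\sum_{j=1}^n c_ic_j\big(-d_{\mathrm{Jeff}}(\boldsymbol y_i,\boldsymbol y_j)\big)<0$.
   Context: For distributions $\boldsymbol y,\boldsymbol y'$ on $\mathbb{R}^K$ with densities $y,y'$, the Kullback–Leibler divergence is $d_{\mathrm{KL}}(\boldsymbol y,\boldsymbol y')=\int y(\boldsymbol z)\log\frac{y(\boldsymbol z)}{y'(\boldsymbol z)}\,\mathrm{d}\boldsymbol z$, and Jeffrey's divergence is $d_{\mathrm{Jeff}}(\boldsymbol y,\boldsymbol y')=d_{\mathrm{KL}}(\boldsymbol y,\boldsymbol y')+d_{\mathrm{KL}}(\boldsymbol y',\boldsymbol y)$. A symmetric function $g$ on $\mathcal{Y}^2$ is conditionally positive definite if $\sum_{i,j}c_ic_jg(\boldsymbol y_i,\boldsymbol y_j)\ge0$ for all finite families $\boldsymbol y_i\in\mathcal{Y}$ and real $c_i$ with $\sum_i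 c_i=0$. *)

(* Defs.v *)
From HB Require Import structures.
From mathcomp Require Import all_boot all_order all_algebra.
From mathcomp Require Import all_classical all_reals all_analysis.
Set Implicit Arguments. Unset Strict Implicit. Unset Printing Implicit Defensive.
Import Order.TTheory GRing.Theory Num.Theory.
Local Open Scope ring_scope.

Section Defs.
Variable R : realType.

Definition posdefmx (K : nat) (S : 'M[R]_K) : Prop :=
  S^T = S /\ forall x : 'cV[R]_K, x != 0 -> 0 < (x^T *m S *m x) 0 0.

Record normal_param (K : nat) := NormalParam {
  np_mu : 'cV[R]_K;
  np_Sigma : 'M[R]_K;
  np_posdef : posdefmx np_Sigma }.

Definition normal_pdf (K : nat) (y : normal_param K) (z : 'cV[R]_K) : R :=
  let d := z - np_mu y in
  (Num.sqrt ((2 * pi) ^+ K * \det (np_Sigma y)))^-1 *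
  expR (- (d^T *m invmx (np_Sigma y) *m d) 0 0 / 2).

(* Lebesgue integral over R^n, written as the iterated integral of
   one-dimensional Lebesgue integrals (cons the first coordinate) *)
Definition vcons (x : R) (v : nat -> R) : nat -> R :=
  fun i => if i is i'.+1 then v i' else x.

Fixpoint iter_integral (n : nat) (f : (nat -> R) -> \bar R) : \bar R :=
  match n with
  | 0 => f (fun _ => 0)
  | n'.+1 => (\int[@lebesgue_measure R]_x iter_integral n' (fun v => f (vcons x v)))%E
  end.

Definition integral_Rn (K : nat) (g : 'cV[R]_K -> \bar R) : \bar R :=
  iter_integral K (fun v => g (\col_(i < K) v (nat_of_ord i))).

Definition d_KL (K : nat) (y y' : normal_param K) : \bar R :=
  integral_Rn (fun z => (normal_pdf y z * ln (normal_pdf y z / normal_pdf y' z))%:E).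

Definition d_Jeff (K : nat) (y y' : normal_param K) : \bar R :=
  (d_KL y y' + d_KL y' y)%E.

End Defs.

(* Main.v *)
Require Import Defs.
From HB Require Import structures.
From mathcomp Require Import all_boot all_order all_algebra.
From mathcomp Require Import all_classical all_reals all_analysis.
From mathcomp Require Import measurable_realfun.
From mathcomp Require Import ring lra.
Import Order.TTheory GRing.Theory Num.Theory.
Local Open Scope ring_scope.

Section OneD.
Local Open Scope classical_set_scope.
Context {R : realType}.
Local Notation mu := (@lebesgue_measure R).
Local Notation g := (@normal_distribution.normal_pdf R 0).

Lemma gE (s x : R) : s != 0 -> g s x = normal_peak s * expR (- x ^+ 2 / (s ^+ 2 *+ 2)).
Proof. by move=> s0; rewrite normal_pdfE // /normal_fun subr0. Qed.

Lemma g_gt0 (s x : R) : s != 0 -> 0 < g s x.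
Proof. by move=> s0; rewrite gE // mulr_gt0 ?normal_peak_gt0 ?expR_gt0. Qed.

Lemma ln_g (s x : R) : s != 0 ->
  ln (g s x) = ln (normal_peak s) - x ^+ 2 / (s ^+ 2 *+ 2).
Proof.
move=> s0; rewrite gE // lnM ?expRK ?mulNr //; rewrite posrE.
  exact: normal_peak_gt0.
exact: expR_gt0.
Qed.

Lemma measurable_g s : measurable_fun setT (g s).
Proof. exact: measurable_normal_pdf. Qed.

Lemma measurable_x2g s : measurable_fun setT (fun x : R => (x ^+ 2 * g s x)%:E).
Proof.
apply/measurable_EFinP; apply: measurable_funM; last exact: measurable_g.
exact: measurable_funX.
Qed.

Definition M s := (\int[mu]_x (x ^+ 2 * g s x)%:E)%E.

Lemma FE (s : R) : (fun y : R^o => y * s)^`()%classic = cst s.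
Proof.
apply/funext => x; rewrite derive1E deriveM// derive_id derive_cst.
by rewrite scaler0 add0r; apply: mulr1.
Qed.

Lemma peak_s (s : R) : 0 < s -> normal_peak s * s = normal_peak 1.
Proof.
move=> s0; rewrite /normal_peak -!mulrnAr expr1n mul1r sqrtrM ?sqr_ge0 //.
rewrite sqrtr_sqr gtr0_norm // invfM mulrAC mulVf ?mul1r //; exact: lt0r_neq0.
Qed.

Lemma M_scale s : 0 < s -> M s = ((s ^+ 2)%:E * M 1)%E.
Proof.
move=> s0.
have sn0 : s != 0 by exact: lt0r_neq0.
rewrite /M (@increasing_ge0_integration_by_substitutionT _ (fun y : R^o => y * s)).
- rewrite FE.
  have E x : (((fun x => x ^+ 2 * g s x) \o (fun y : R^o => y * s)) * cst s) x
     = s ^+ 2 * (x ^+ 2 * g 1 x).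
    change ((x * s) ^+ 2 * g s (x * s) * s = s ^+ 2 * (x ^+ 2 * g 1 x)).
    rewrite !gE ?oner_neq0 // -(peak_s _ s0).
    have -> : - (x * s) ^+ 2 / (s ^+ 2 *+ 2) = - x ^+ 2 / (1 ^+ 2 *+ 2).
      by field.
    ring.
  under eq_integral => x _ do rewrite E EFinM.
  rewrite ge0_integralZl //.
  + exact: measurable_x2g.
  + by move=> x _; rewrite lee_fin mulr_ge0 ?sqr_ge0 ?normal_pdf_ge0.
  + by rewrite lee_fin sqr_ge0.
- by move=> x y xy; rewrite ltr_pM2r.
- by rewrite FE => x; exact: cvg_cst.
- by rewrite FE; exact: is_cvg_cst.
- by rewrite FE; exact: is_cvg_cst.
- by move=> x; apply: derivableM.
- by apply: gt0_cvgMlNy => //; exact: cvg_id.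
- by apply: gt0_cvgMly => //; exact: cvg_id.
- move=> x; apply: cvgM; first exact: sqr_continuous.
  exact: continuous_normal_pdf.
- by move=> x; rewrite mulr_ge0 ?sqr_ge0 ?normal_pdf_ge0.
Qed.
End OneD.

Section T.
Local Open Scope classical_set_scope.
Context {R : realType}.
Local Notation mu := (@lebesgue_measure R).
Local Notation g := (@normal_distribution.normal_pdf R 0).
Lemma x2g1_le x : x ^+ 2 * g 1 x <= (8 * normal_peak 1 / normal_peak 2) * g 2 x.
Proof.
have p1 : 0 < normal_peak (1 : R) by apply: normal_peak_gt0; exact: oner_neq0.
have p2 : 0 < normal_peak (2 : R) by apply: normal_peak_gt0; rewrite pnatr_eq0.
rewrite !gE ?oner_neq0 ?pnatr_eq0 //.
have e1 : (1:R) ^+ 2 *+ 2 = 2 by rewrite expr1n.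
have e2 : (2:R) ^+ 2 *+ 2 = 8 by rewrite -mulr_natr; ring.
rewrite e1 e2.
have h1 : x ^+ 2 <= 8 * expR (x ^+ 2 / 8).
  have := expR_ge1Dx (x ^+ 2 / 8); lra.
have h2 : expR (x ^+ 2 / 8) * expR (- x ^+ 2 / 2) <= expR (- x ^+ 2 / 8).
  rewrite -expRD ler_expR.
  have : 0 <= x ^+ 2 by exact: sqr_ge0.
  lra.
have -> : 8 * normal_peak 1 / normal_peak 2 * (normal_peak 2 * expR (- x ^+ 2 / 8))
   = normal_peak 1 * (8 * expR (- x ^+ 2 / 8)).
  by field; exact: lt0r_neq0.
rewrite mulrCA ler_pM2l //.
apply: (le_trans (y := 8 * expR (x ^+ 2 / 8) * expR (- x ^+ 2 / 2))).
  by rewrite ler_wpM2r // expR_ge0.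
by rewrite -mulrA ler_wpM2l.
Qed.

Lemma M1_fin : (@M R 1 < +oo)%E.
Proof.
have p1 : 0 < normal_peak (1 : R) by apply: normal_peak_gt0; exact: oner_neq0.
have p2 : 0 < normal_peak (2 : R) by apply: normal_peak_gt0; rewrite pnatr_eq0.
pose C : R := 8 * normal_peak 1 / normal_peak 2.
rewrite /M.
have H : (\int[mu]_x (x ^+ 2 * g 1 x)%:E <= \int[mu]_x (C%:E * (g 2 x)%:E))%E.
  apply: ge0_le_integral => //.
  - by move=> x _; rewrite lee_fin mulr_ge0 ?sqr_ge0 ?normal_pdf_ge0.
  - exact: measurable_x2g.
  - apply: emeasurable_funM => //; apply/measurable_EFinP; exact: measurable_g.
  - by move=> x _; rewrite -EFinM lee_fin; exact: x2g1_le.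
apply: (le_lt_trans H).
rewrite integralZl //; last exact: integrable_normal_pdf.
by rewrite integral_normal_pdf mule1 ltry.
Qed.

Lemma M1_pos : (0 < @M R 1)%E.
Proof.
have p1 : 0 < normal_peak (1 : R) by apply: normal_peak_gt0; exact: oner_neq0.
rewrite /M.
have H1 : (\int[mu]_(x in `[1%R, 2%R]) (x ^+ 2 * g 1%R x)%:E <= \int[mu]_x (x ^+ 2 * g 1%R x)%:E)%E.
  apply: ge0_subset_integral => //.
  - exact: measurable_x2g.
  - by move=> x _; rewrite lee_fin mulr_ge0 ?sqr_ge0 ?normal_pdf_ge0.
apply: (lt_le_trans _ H1).
have H2 : (\int[mu]_(x in `[1%R, 2%R]) cst (normal_peak 1 * expR (-2)%R)%:E x <=
   \int[mu]_(x in `[1%R, 2%R]) (x ^+ 2 * g 1%R x)%:E)%E.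
  apply: ge0_le_integral => //.
  - by move=> x _; rewrite lee_fin mulr_ge0 ?expR_ge0 // ltW.
  - apply: measurable_funTS; exact: measurable_x2g.
  - move=> x; rewrite /= in_itv /= => /andP[x1 x2].
    rewrite gE ?oner_neq0 // lee_fin expr1n.
    have e1 : (1:R) *+ 2 = 2 by [].
    rewrite e1 mulrCA ler_pM2l // -[X in X <= _]mul1r.
    have x0 : 0 <= x by apply: le_trans x1.
    apply: ler_pM.
    + by [].
    + by rewrite expR_ge0.
    + by rewrite -(expr1n _ 2) ler_pXn2r // ?nnegrE.
    rewrite ler_expR.
    have : x ^+ 2 <= 4.
      have -> : (4 : R) = 2 ^+ 2 by rewrite expr2; ring.
      by rewrite ler_pXn2r // ?nnegrE.
    lra.
apply: (lt_le_trans _ H2).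
rewrite integral_cst //= lebesgue_measure_itv /= lte_fin ltr1n.
by rewrite -EFinD -EFinM lte_fin mulr_gt0 ?mulr_gt0 ?expR_gt0 // subr_gt0 ltr1n.
Qed.

Lemma M1E : @M R 1 = (fine (@M R 1))%:E.
Proof. by rewrite fineK // ge0_fin_numE ?M1_fin // ltW // M1_pos. Qed.

Lemma integrable_x2g s : 0 < s ->
  mu.-integrable setT (fun x => (x ^+ 2 * g s x)%:E).
Proof.
move=> s0; apply/integrableP; split; first exact: measurable_x2g.
have -> : (\int[mu]_x `|(x ^+ 2 * g s x)%:E|)%E = M s.
  apply: eq_integral => x _.
  by rewrite gee0_abs // lee_fin mulr_ge0 ?sqr_ge0 ?normal_pdf_ge0.
by rewrite M_scale // M1E -EFinM ltry.
Qed.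

Definition KL1 s t := (\int[mu]_x (g s x * ln (g s x / g t x))%:E)%E.

Lemma KL1E s t : 0 < s -> 0 < t -> KL1 s t =
  (ln (normal_peak s) - ln (normal_peak t) +
   (1 / (t ^+ 2 *+ 2) - 1 / (s ^+ 2 *+ 2)) * (s ^+ 2 * fine (@M R 1)))%:E.
Proof.
move=> s0 t0.
have sn0 : s != 0 by exact: lt0r_neq0.
have tn0 : t != 0 by exact: lt0r_neq0.
have E x : g s x * ln (g s x / g t x) =
   (ln (normal_peak s) - ln (normal_peak t)) * g s x +
   (1 / (t ^+ 2 *+ 2) - 1 / (s ^+ 2 *+ 2)) * (x ^+ 2 * g s x).
  rewrite ln_div ?posrE ?g_gt0 // !ln_g //.
  by field; rewrite sn0 tn0.
rewrite /KL1.
under eq_integral => x _ do rewrite E EFinD (EFinM _ (g s x)) (EFinM _ (x ^+ 2 * g s x)).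
rewrite integralD //; first last.
- by apply: integrableZl => //; exact: integrable_x2g.
- by apply: integrableZl => //; exact: integrable_normal_pdf.
rewrite !integralZl //; try exact: integrable_normal_pdf; try exact: (integrable_x2g _ s0).
rewrite integral_normal_pdf -/(M s) M_scale // [in LHS]M1E.
  by rewrite -!EFinM -EFinD mulr1.
Qed.
End T.

Section KD.
Local Open Scope classical_set_scope.
Context {R : realType}.
Local Notation mu := (@lebesgue_measure R).
Local Notation g := (@normal_distribution.normal_pdf R 0).

Definition wv (n : nat) (s : R) : 'rV[R]_n.+1 := \row_i (if i == ord0 then s ^+ 2 else 1).
Definition wv' (n : nat) (s : R) : 'rV[R]_n.+1 := \row_i (if i == ord0 then (s ^+ 2)^-1 else 1).

Lemma quadE n (z : 'cV[R]_n) (e : 'rV[R]_n) :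
  (z^T *m diag_mx e *m z) 0 0 = \sum_j z j 0 ^+ 2 * e 0 j.
Proof.
rewrite mul_mx_diag !mxE; apply: eq_bigr => j _; rewrite !mxE; ring.
Qed.

Lemma posdef_Sig n s : s != 0 -> posdefmx (diag_mx (@wv n s)).
Proof.
move=> s0; split; first exact: tr_diag_mx.
move=> x x0; rewrite quadE.
have [j xj] : exists j, x j 0 != 0.
  apply/existsP; move: x0; apply: contraR; rewrite negb_exists => /forallP H.
  apply/eqP/matrixP => i k; rewrite ord1 !mxE; apply/eqP.
  by have := H i; rewrite negbK.
have wpos i : 0 < wv n s 0 i.
  by rewrite mxE; case: (i == ord0) => //; rewrite exprn_even_gt0.
rewrite (bigD1 j) //=; apply: ltr_pwDl.
  by apply: mulr_gt0; [rewrite exprn_even_gt0 | exact: wpos].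
apply: sumr_ge0 => i _; apply: mulr_ge0; [exact: sqr_ge0 | exact: ltW].
Qed.

Lemma det_Sig n s : \det (diag_mx (@wv n s)) = s ^+ 2.
Proof.
rewrite det_diag big_ord_recl big1 ?mulr1; first by rewrite mxE eqxx.
by move=> i _; rewrite mxE.
Qed.

Lemma inv_Sig n s : s != 0 -> invmx (diag_mx (@wv n s)) = diag_mx (wv' n s).
Proof.
move=> s0.
have U : diag_mx (wv n s) \in unitmx.
  by rewrite unitmxE det_Sig unitfE expf_neq0.
have H : diag_mx (wv n s) *m diag_mx (wv' n s) = 1%:M.
  rewrite mulmx_diag -diag_const_mx; congr diag_mx; apply/rowP => j.
  rewrite !mxE; case: (j == ord0) => //; first by rewrite divff ?expf_neq0.
  by rewrite mulr1.
by rewrite -[invmx _]mulmx1 -H mulKmx.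
Qed.

Lemma sqrtrXn (b : R) k : 0 <= b -> Num.sqrt (b ^+ k) = Num.sqrt b ^+ k.
Proof.
move=> b0; elim: k => [|k IH]; first by rewrite !expr0 sqrtr1.
by rewrite !exprS sqrtrM // IH.
Qed.


Definition yN n (s : R) (hs : s != 0) : normal_param R n.+1 :=
  NormalParam 0 (@posdef_Sig n s hs).

Lemma pdfE n (s : R) (hs : s != 0) (z : 'cV[R]_n.+1) :
  Defs.normal_pdf (@yN n s hs) z = g s (z ord0 0) * \prod_(i < n) g 1 (z (lift ord0 i) 0).
Proof.
rewrite /Defs.normal_pdf /= subr0 det_Sig inv_Sig // quadE big_ord_recl.
rewrite gE //.
under eq_bigr => i _ do rewrite gE ?oner_neq0 //.
rewrite big_split /= prodr_const card_ord -expR_sum.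
have pi0 : 0 <= pi :> R by exact: pi_ge0.
have -> : (2 * pi) ^+ n.+1 * s ^+ 2 = (s ^+ 2 * pi *+ 2) * (1 ^+ 2 * pi *+ 2) ^+ n.
  have e2 : (pi *+ 2 : R) = 2 * pi by rewrite mulr_natl.
  by rewrite expr1n mul1r exprS e2; ring.
rewrite sqrtrM; last by rewrite mulrn_wge0 // mulr_ge0 ?sqr_ge0.
rewrite sqrtrXn; last by rewrite mulrn_wge0 // mulr_ge0 ?sqr_ge0.
rewrite /normal_peak invfM exprVn !mxE eqxx /=.
have -> : \sum_(i < n) - z (lift ord0 i) 0 ^+ 2 / (1 ^+ 2 *+ 2) =
   - (\sum_(i < n) z (lift ord0 i) 0 ^+ 2 * wv' n s 0 (lift ord0 i)) / 2.
  rewrite -sumrN big_distrl /=; apply: eq_bigr => i _; rewrite !mxE /=.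
  by rewrite expr1n; field.
set S := (\sum_(i < n) z (lift ord0 i) 0 ^+ 2 * wv' n s 0 (lift ord0 i)).
have -> : - (z ord0 0 ^+ 2 / s ^+ 2 + S) / 2 =
          - z ord0 0 ^+ 2 / (s ^+ 2 *+ 2) + - S / 2.
  by field.
rewrite expRD; ring.
Qed.

Lemma vcons0 (x : R) w : vcons x w 0%N = x. Proof. by []. Qed.
Lemma vconsS (x : R) w (i : nat) : vcons x w i.+1 = w i. Proof. by []. Qed.

Lemma iter_prod n (a : R) :
  iter_integral n (fun w => (a * \prod_(i < n) g 1 (w i))%:E) = a%:E.
Proof.
elim: n a => [|n IH] a /=; first by rewrite big_ord0 mulr1.
transitivity (\int[mu]_x ((a * g 1 x)%:E))%E.
  apply: eq_integral => x _; rewrite -IH; congr iter_integral; apply/funext => w.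
  by rewrite big_ord_recl mulrA.
under eq_integral => x _ do rewrite EFinM.
rewrite integralZl //; last exact: integrable_normal_pdf.
by rewrite integral_normal_pdf mule1.
Qed.

Lemma dKL_E n (s t : R) (hs : s != 0) (ht : t != 0) :
  d_KL (@yN n s hs) (@yN n t ht) = KL1 s t.
Proof.
rewrite /d_KL /integral_Rn /= /KL1.
apply: eq_integral => x _.
rewrite -(iter_prod n); congr iter_integral; apply/funext => w.
rewrite !pdfE !mxE /=.
set P := \prod_(i < n) _.
have P0 : 0 < P by apply: prodr_gt0 => i _; apply: g_gt0; exact: oner_neq0.
have gt0 : 0 < g t x by exact: g_gt0.
have -> : g s x * P / (g t x * P) = g s x / g t x.
  by field; rewrite !lt0r_neq0.
congr EFin; rewrite -mulrA [P * _]mulrC mulrA; congr (_ * _).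
by apply: eq_bigr => i _; rewrite !mxE lift0.
Qed.
End KD.

Local Open Scope ring_scope.

Lemma JeffE (R : realType) n (s t : R) (hs : s != 0) (ht : t != 0) :
  0 < s -> 0 < t ->
  d_Jeff (@yN R n s hs) (@yN R n t ht) =
  ((s ^+ 2 / t ^+ 2 + t ^+ 2 / s ^+ 2 - 2) * fine (@M R 1) / 2)%:E.
Proof.
move=> s0 t0; rewrite /d_Jeff !dKL_E !KL1E // -EFinD; congr EFin.
by field; rewrite !lt0r_neq0.
Qed.

Theorem propositionA1 (R : realType) (K : nat) (hK : (0 < K)%N) :
  exists (n : nat) (y : 'I_n -> normal_param R K) (c : 'I_n -> R),
    \sum_(i < n) c i = 0 /\
    (\sum_(i < n) \sum_(j < n) ((c i * c j)%:E * - d_Jeff (y i) (y j)) < 0)%E.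
Proof.
case: K hK => [//|n] _.
pose sg (i : 'I_3) : R := nth 1 [:: 1; 2; 4] i.
have sgp i : 0 < sg i.
  by case: i => [[|[|[|]]] //= _]; rewrite /sg /= ltr0n.
have sg0 i : sg i != 0 by exact: lt0r_neq0.
exists 3, (fun i => @yN R n (sg i) (sg0 i)), (fun i => nth 0 [:: 1; -2; 1] i).
split.
  by rewrite !big_ord_recr big_ord0 /=; lra.
have m0 : 0 < fine (@M R 1) by rewrite -lte_fin -M1E M1_pos.
under eq_bigr => i _ do under eq_bigr => j _ do rewrite JeffE // -EFinN -EFinM.
under eq_bigr => i _ do rewrite sumEFin.
rewrite sumEFin lte_fin.
rewrite !big_ord_recr !big_ord0 /=.
rewrite /sg /=.
set m := fine _.
match goal with |- is_true (?L < _) => have -> : L = - (81 / 16) * m by field end.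
rewrite mulNr oppr_lt0; apply: mulr_gt0 => //.

Qed.
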